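(* Let $T,T'$ be System $\mathsf{F_\wedge}$ types over a well-formed context $\Theta, X <: \top$ with $\Theta, X <: \top \vdash T <: T'$, and let $S_-,S_+$ be any types well-formed over a well-formed context $\Theta,\Theta'$. Then $\Theta,\Theta' \vdash T[(S_-,S_+)/X] <: T'[(S_-,S_+)/X]$.
   Context: System $\mathsf{F_\wedge}$: raw types $T ::= \top \mid X \mid T \to T \mid \forall X.T \mid T \wedge T$, identified up to $\alpha$-conversion. Contexts are finite sequences of assumptions $X<:T$ or $x:T$ with distinct variables, each type well-formed over the preceding part. Subtyping $\Theta \vdash S <: T$ is generated by: (Var) $\Theta, X<:T,\Theta' \vdash X <: T$; (Top) $T <: \top$; (Refl); (Trans); ($\to$) from $S'<:S$ and $T<:T'$ infer $S\to T <: S' \to T'$; ($\forall$) from $\Theta, X<:\top \vdash S <: T$ infer $\Theta \vdash \forall X.S <: \forall X.T$; (meet) $S\wedge S' <: S$, $S \wedge S' <: S'$, and from $T<:S$, $T<:S'$ infer $T <: S\wedge S'$. Mixed substitution $T[(S_-,S_+)/X]$ (assuming by $\alpha$-conversion that neither $X$ nor free variables of $S_-,S_+$ are bound in $T$): $X[(S_-,S_+)/X] = S_+$; $Y[(S_-,S_+)/X] = Y$ for $Y \not\equiv X$; $\top[(S_-,S_+)/X]=\top$; $(T\to T')[(S_-,S_+)/X] = T[(S_+,S_-)/X] \to T'[(S_-,S_+)/X]$; $(\forall Y.T)[(S_-,S_+)/X] = \forall Y.T[(S_-,S_+)/X]$; $(T\wedge T')[(S_-,S_+)/X] = T[(S_-,S_+)/X]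 \wedge T'[(S_-,S_+)/X]$. *)

(* Defs.v *)
(* System F-meet types in locally nameless representation:
   free type variables are named atoms (nat), bound ones are de Bruijn indices,
   so alpha-conversion is built in. *)
From Stdlib Require Import List Arith.
Import ListNotations.

Definition atom := nat.

Inductive typ : Type :=
  | typ_top : typ
  | typ_bvar : nat -> typ
  | typ_fvar : atom -> typ
  | typ_arrow : typ -> typ -> typ
  | typ_all : typ -> typ            (* forall X. T  (X bound as index 0) *)
  | typ_meet : typ -> typ -> typ.

Fixpoint open_rec (k : nat) (U : typ) (T : typ) : typ :=
  match T with
  | typ_top => typ_top
  | typ_bvar n => if Nat.eqb k n then U else typ_bvar n
  | typ_fvar X => typ_fvar X
  | typ_arrow T1 T2 => typ_arrow (open_rec k U T1) (open_rec k U T2)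
  | typ_all T1 => typ_all (open_rec (S k) U T1)
  | typ_meet T1 T2 => typ_meet (open_rec k U T1) (open_rec k U T2)
  end.

Definition open (T U : typ) : typ := open_rec 0 U T.

Inductive binding : Type :=
  | bind_sub : typ -> binding
  | bind_typ : typ -> binding.

(* Contexts are written left to right, the most recent assumption LAST:
   Theta, X <: T  is  Theta ++ [(X, bind_sub T)]. *)
Definition env := list (atom * binding).

Definition dom (E : env) : list atom := map fst E.

Inductive wf_typ : env -> typ -> Prop :=
  | wf_typ_top : forall E, wf_typ E typ_top
  | wf_typ_var : forall E X U, In (X, bind_sub U) E -> wf_typ E (typ_fvar X)
  | wf_typ_arrow : forall E T1 T2,
      wf_typ E T1 -> wf_typ E T2 -> wf_typ E (typ_arrow T1 T2)
  | wf_typ_all : forall E T (L : list atom),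
      (forall X, ~ In X L -> wf_typ (E ++ [(X, bind_sub typ_top)]) (open T (typ_fvar X))) ->
      wf_typ E (typ_all T)
  | wf_typ_meet : forall E T1 T2,
      wf_typ E T1 -> wf_typ E T2 -> wf_typ E (typ_meet T1 T2).

Inductive wf_env : env -> Prop :=
  | wf_env_nil : wf_env []
  | wf_env_sub : forall E X T,
      wf_env E -> ~ In X (dom E) -> wf_typ E T -> wf_env (E ++ [(X, bind_sub T)])
  | wf_env_typ : forall E x T,
      wf_env E -> ~ In x (dom E) -> wf_typ E T -> wf_env (E ++ [(x, bind_typ T)]).

(* Subtyping, exactly the rules of the paper (no extra side conditions);
   the (forall) rule uses cofinite quantification for the fresh variable. *)
Inductive sub : env -> typ -> typ -> Prop :=
  | sub_var : forall E X T, In (X, bind_sub T) E -> sub E (typ_fvar X) T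
  | sub_top : forall E T, sub E T typ_top
  | sub_refl : forall E T, sub E T T
  | sub_trans : forall E S U T, sub E S U -> sub E U T -> sub E S T
  | sub_arrow : forall E S S' T T',
      sub E S' S -> sub E T T' -> sub E (typ_arrow S T) (typ_arrow S' T')
  | sub_all : forall E S T (L : list atom),
      (forall X, ~ In X L ->
         sub (E ++ [(X, bind_sub typ_top)]) (open S (typ_fvar X)) (open T (typ_fvar X))) ->
      sub E (typ_all S) (typ_all T)
  | sub_meet_l : forall E S S', sub E (typ_meet S S') S
  | sub_meet_r : forall E S S', sub E (typ_meet S S') S'
  | sub_meet_glb : forall E T S S',
      sub E T S -> sub E T S' -> sub E T (typ_meet S S').

(* Mixed substitution T[(Sm,Sp)/X]: positive occurrences of X get Sp, and the
   roles swap in the domain of an arrow. *)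
Fixpoint msubst (X : atom) (Sm Sp : typ) (T : typ) : typ :=
  match T with
  | typ_top => typ_top
  | typ_bvar n => typ_bvar n
  | typ_fvar Y => if Nat.eqb Y X then Sp else typ_fvar Y
  | typ_arrow T1 T2 => typ_arrow (msubst X Sp Sm T1) (msubst X Sm Sp T2)
  | typ_all T1 => typ_all (msubst X Sm Sp T1)
  | typ_meet T1 T2 => typ_meet (msubst X Sm Sp T1) (msubst X Sm Sp T2)
  end.

(* Main.v *)
Require Import Defs.
From Stdlib Require Import List Arith Lia.
Import ListNotations.

Fixpoint notin_fv (X : atom) (T : typ) : Prop :=
  match T with
  | typ_top => True
  | typ_bvar _ => True
  | typ_fvar Y => Y <> X
  | typ_arrow A B => notin_fv X A /\ notin_fv X B
  | typ_all A => notin_fv X A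
  | typ_meet A B => notin_fv X A /\ notin_fv X B
  end.

Lemma msubst_notin : forall X T A B, notin_fv X T -> msubst X A B T = T.
Proof.
  intros X T; induction T; intros A B H; simpl in *; try tauto.
  - destruct (Nat.eqb_spec a X); congruence.
  - destruct H; rewrite IHT1, IHT2; auto.
  - rewrite IHT; auto.
  - destruct H; rewrite IHT1, IHT2; auto.
Qed.

Lemma notin_open : forall X T k U, notin_fv X (open_rec k U T) -> notin_fv X T.
Proof.
  intros X T; induction T; intros k U H; simpl in *; try tauto; eauto.
  - destruct H; split; eauto.
  - destruct H; split; eauto.
Qed.

Lemma fresh : forall L : list atom, exists Z, ~ In Z L.
Proof.
  intros L. exists (S (fold_right max 0 L)).
  assert (forall z, In z L -> z <= fold_right max 0 L).
  { induction L; simpl; intros z Hz; [contradiction|].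
    destruct Hz; subst; [lia|]. specialize (IHL z H). lia. }
  intro Hin. apply H in Hin. lia.
Qed.

Lemma wf_notin : forall G U, wf_typ G U -> forall X, ~ In X (dom G) -> notin_fv X U.
Proof.
  induction 1; intros Y HY; simpl; auto.
  - intro; subst. apply HY. unfold dom. apply (in_map fst) in H. exact H.
  - destruct (fresh (Y :: L)) as [Z HZ].
    assert (~ In Z L) by (intro; apply HZ; right; auto).
    eapply notin_open. apply (H0 Z H1 Y).
    unfold dom. rewrite map_app. simpl. intro Hi. apply in_app_or in Hi.
    destruct Hi as [Hi|[Hi|[]]]; [contradiction|]. apply HZ; left; auto.
Qed.

Lemma wf_env_in : forall G, wf_env G -> forall Y U, In (Y, bind_sub U) G ->
  exists G1, wf_typ G1 U /\ incl (dom G1) (dom G).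
Proof.
  induction 1; intros Y U Hin; [contradiction| |]; apply in_app_or in Hin;
    destruct Hin as [Hin|[Hin|[]]].
  - destruct (IHwf_env _ _ Hin) as [G1 [K1 K2]]. exists G1; split; auto.
    unfold dom in *; rewrite map_app. intros a Ha; apply in_or_app; left; auto.
  - inversion Hin; subst. exists E; split; auto.
    unfold dom; rewrite map_app. intros a Ha; apply in_or_app; left; auto.
  - destruct (IHwf_env _ _ Hin) as [G1 [K1 K2]]. exists G1; split; auto.
    unfold dom in *; rewrite map_app. intros a Ha; apply in_or_app; left; auto.
  - discriminate.
Qed.

Lemma open_rec_lc_core : forall T j V i U, i <> j ->
  open_rec i U (open_rec j V T) = open_rec j V T -> open_rec i U T = T.
Proof.
  induction T; intros j V i U Hij H; simpl in *; auto.
  - destruct (Nat.eqb_spec j n); destruct (Nat.eqb_spec i n); subst; auto.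
    + lia.
    + simpl in H. rewrite Nat.eqb_refl in H. auto.
  - injection H; intros; f_equal; eauto.
  - injection H; intros; f_equal; eapply IHT; [|eauto]; lia.
  - injection H; intros; f_equal; eauto.
Qed.

Definition lc (S : typ) := forall k V, open_rec k V S = S.

Lemma wf_lc : forall G U, wf_typ G U -> lc U.
Proof.
  unfold lc; induction 1; intros k V; simpl; auto.
  - rewrite IHwf_typ1, IHwf_typ2; auto.
  - destruct (fresh L) as [Z HZ]. f_equal.
    eapply open_rec_lc_core with (j := 0) (V := typ_fvar Z). lia.
    apply H0; auto.
  - rewrite IHwf_typ1, IHwf_typ2; auto.
Qed.

Lemma open_msubst : forall T k Z X A B, Z <> X -> lc A -> lc B ->
  open_rec k (typ_fvar Z) (msubst X A B T) = msubst X A B (open_rec k (typ_fvar Z) T).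
Proof.
  induction T; intros k Z X A B HZ HA HB; simpl; auto.
  - destruct (Nat.eqb k n); simpl; auto.
    destruct (Nat.eqb_spec Z X); congruence.
  - destruct (Nat.eqb a X); simpl; auto.
  - rewrite IHT1, IHT2; auto.
  - rewrite IHT; auto.
  - rewrite IHT1, IHT2; auto.
Qed.

Lemma main_gen : forall X E T T', sub E T T' -> forall F Sm Sp, lc Sm -> lc Sp ->
  (forall Y U, In (Y, bind_sub U) E -> (Y = X /\ U = typ_top) \/
     (Y <> X /\ notin_fv X U /\ In (Y, bind_sub U) F)) ->
  sub F (msubst X Sm Sp T) (msubst X Sm Sp T').
Proof.
  intros X. induction 1; intros F Sm Sp HSm HSp Hinv; simpl.
  - destruct (Hinv _ _ H) as [[-> ->]|[HXY [Hn Hin]]].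
    + simpl. apply sub_top.
    + destruct (Nat.eqb_spec X0 X); [contradiction|].
      rewrite msubst_notin by auto. apply sub_var; auto.
  - apply sub_top.
  - apply sub_refl.
  - eapply sub_trans; eauto.
  - apply sub_arrow; eauto.
  - apply sub_all with (L := X :: L). intros Z HZ.
    assert (ZX : Z <> X) by (intro; apply HZ; left; auto).
    assert (ZL : ~ In Z L) by (intro; apply HZ; right; auto).
    unfold open. rewrite !open_msubst by auto.
    apply H0; auto.
    intros Y U Hin. apply in_app_or in Hin. destruct Hin as [Hin|[Hin|[]]].
    + destruct (Hinv _ _ Hin) as [Hc|[h1 [h2 h3]]]; auto.
      right; repeat split; auto. apply in_or_app; left; auto.
    + inversion Hin; subst. right; repeat split; simpl; auto.
      apply in_or_app; right; left; auto.
  - apply sub_meet_l.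
  - apply sub_meet_r.
  - apply sub_meet_glb; eauto.
Qed.

Theorem lemma3p5 :
  forall (Theta Theta' : env) (X : atom) (T T' Sm Sp : typ),
    wf_env (Theta ++ [(X, bind_sub typ_top)]) ->
    wf_typ (Theta ++ [(X, bind_sub typ_top)]) T ->
    wf_typ (Theta ++ [(X, bind_sub typ_top)]) T' ->
    sub (Theta ++ [(X, bind_sub typ_top)]) T T' ->
    wf_env (Theta ++ Theta') ->
    wf_typ (Theta ++ Theta') Sm ->
    wf_typ (Theta ++ Theta') Sp ->
    sub (Theta ++ Theta') (msubst X Sm Sp T) (msubst X Sm Sp T').
Proof.
  intros Theta Theta' X T T' Sm Sp Henv _ _ Hsub _ HSm HSp.
  assert (Hth : wf_env Theta /\ ~ In X (dom Theta)).
  { inversion Henv.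
    - destruct Theta; discriminate.
    - apply app_inj_tail in H. destruct H as [-> H]. inversion H; subst; auto.
    - apply app_inj_tail in H. destruct H as [_ H]. discriminate. }
  destruct Hth as [HwT HXT].
  eapply main_gen; eauto using wf_lc.
  intros Y U Hin. apply in_app_or in Hin. destruct Hin as [Hin|[Hin|[]]].
  - right. destruct (wf_env_in _ HwT _ _ Hin) as [G1 [Hw Hincl]].
    repeat split.
    + intro; subst. apply HXT. unfold dom. apply (in_map fst) in Hin. exact Hin.
    + eapply wf_notin; eauto.
    + apply in_or_app; left; auto.
  - inversion Hin; subst; left; auto.
Qed.
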